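(* Let $R$ be a finite commutative local ring with $\mathrm{char}(R)=2^n$ for some integer $n\geq 3$. The following are equivalent: (1) $\Gamma(R)$ has genus exactly $1$; (2) $\Gamma(R)$ is connected and $4$-regular; (3) $R\cong\mathbb{Z}_{2^n}$.
   Context: All rings are finite, commutative, with nonzero identity. The involutory Cayley graph $\Gamma(R)$ is the simple graph with vertex set $R$ in which distinct $x,y$ are adjacent iff $(x-y)^2=1$. Genus means the orientable genus of a graph. *)

(* Defs.v *)
From HB Require Import structures.
From mathcomp Require Import all_boot all_order all_algebra all_fingroup.
Set Implicit Arguments. Unset Strict Implicit. Unset Printing Implicit Defensive.
Import GRing.Theory.
Local Open Scope ring_scope.

Definition is_ideal (R : finComNzRingType) (I : {set R}) : Prop :=
  0 \in I /\ (forall x y, x \in I -> y \in I -> x + y \in I) /\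
  (forall r x, x \in I -> r * x \in I).

Definition is_maximal_ideal (R : finComNzRingType) (M : {set R}) : Prop :=
  is_ideal M /\ (1 \notin M) /\
  (forall J : {set R}, is_ideal J -> M \subset J -> J = M \/ 1 \in J).

Definition local_ring (R : finComNzRingType) : Prop :=
  exists M : {set R}, is_maximal_ideal M /\
    forall M' : {set R}, is_maximal_ideal M' -> M' = M.

Definition ring_char (R : finComNzRingType) (m : nat) : Prop :=
  (0 < m)%N /\ (m%:R : R) = 0 /\
  forall k : nat, (0 < k)%N -> (k < m)%N -> (k%:R : R) != 0.

Definition inv_cayley_adj (R : finComNzRingType) : rel R :=
  fun x y => (x != y) && ((x - y) ^+ 2 == 1).

Definition graph_connected (T : finType) (e : rel T) : Prop :=
  forall x y : T, connect e x y.

Definition graph_regular (T : finType) (e : rel T) (k : nat) : Prop :=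
  forall x : T, #|[set y | e x y]| = k.

Definition is_dart (T : finType) (e : rel T) (d : T * T) : bool := e d.1 d.2.

Definition darts (T : finType) (e : rel T) : {set T * T} := [set d | is_dart e d].

Definition rotation_system (T : finType) (e : rel T) (s : {perm (T * T)}) : Prop :=
  (forall d, ~~ is_dart e d -> s d = d) /\
  (forall d, is_dart e d -> (s d).1 = d.1) /\
  (forall d d', is_dart e d -> is_dart e d' -> d.1 = d'.1 -> fconnect s d d').

Definition face_perm (T : finType) (s : {perm (T * T)}) : T * T -> T * T :=
  fun d => s (d.2, d.1).

Definition isolated_vertices (T : finType) (e : rel T) : {set T} :=
  [set x | [forall y, ~~ e x y]].

(* Number of faces of the embedding given by s: face orbits of darts, plus one
   face for each isolated vertex. *)
Definition num_faces (T : finType) (e : rel T) (s : {perm (T * T)}) : nat :=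
  #|[set [set z | fconnect (face_perm s) d z] | d in darts e]|
  + #|isolated_vertices e|.

Definition num_components (T : finType) (e : rel T) : nat :=
  #|[set [set y | connect e x y] | x : T]|.

(* Genus of the embedding given by s is g where (Euler)
   V - E + F = 2c - 2g, i.e. 4g + 2V + 2F = 4c + 2E = 4c + #darts. *)
Definition embedding_genus (T : finType) (e : rel T) (s : {perm (T * T)}) (g : nat) : Prop :=
  (4 * g + 2 * #|T| + 2 * num_faces e s = 4 * num_components e + #|darts e|)%N.

(* The (orientable) genus of the graph: the minimum genus over all rotation
   systems (Heffter-Edmonds); for disconnected graphs this is the sum of the
   genera of the components. *)
Definition graph_genus (T : finType) (e : rel T) (g : nat) : Prop :=
  (exists s, rotation_system e s /\ embedding_genus e s g) /\
  (forall s, rotation_system e s ->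
     (4 * g + 2 * #|T| + 2 * num_faces e s <= 4 * num_components e + #|darts e|)%N).

(* Main.v *)
Require Import Defs.
From HB Require Import structures.
From mathcomp Require Import all_boot all_order all_algebra all_fingroup.
From mathcomp Require Import zify ring.
Set Implicit Arguments. Unset Strict Implicit. Unset Printing Implicit Defensive.
Import GRing.Theory.
Lemma nt (m k : nat) : k < 8 * 2 ^ m -> k * k = 1 %[mod 8 * 2 ^ m] ->
  [\/ k = 1, k = 8 * 2 ^ m - 1, k = 4 * 2 ^ m + 1 | k = 4 * 2 ^ m - 1].
Proof.
move=> Hk Hmod.
have HP : 0 < 2 ^ m by rewrite expn_gt0.
have E2 : 2 ^ m.+1 = 2 * 2 ^ m by rewrite expnS.
move: Hk Hmod E2 HP; set P := 2 ^ m => Hk Hmod E2 HP.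
have H1 : 1 %% (8 * P) = 1 by rewrite modn_small //; lia.
rewrite H1 in Hmod.
have E := divn_eq (k * k) (8 * P); rewrite Hmod in E.
move: E; set q := (k * k) %/ (8 * P) => E.
have Hodd := odd_double_half k.
move: Hodd; set j := k./2 => Hodd.
case Ho: (odd k) Hodd => /= Hkj; last first.
  exfalso; rewrite -Hkj -muln2 in E; clearbody q; nia.
have Ej : j * (j + 1) = q * (2 * P).
  rewrite -Hkj -muln2 in E; clearbody q; nia.
have Hd : 2 ^ m.+1 %| j * (j + 1) by rewrite E2; apply/dvdnP; exists q.
have Hjlt : j < 4 * P by rewrite -Hkj in Hk; lia.
case Hj: (odd j).
- have Hc : coprime (2 ^ m.+1) j by apply: coprimeXl; rewrite coprime2n.
  rewrite Gauss_dvdr // E2 in Hd.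
  case/dvdnP: Hd => r Hr.
  have Hr3 : r < 3.
    rewrite ltnNge; apply/negP => Hr3.
    have := leq_mul Hr3 (leqnn (2 * P)); lia.
  move: Hr3 Hr; case: r => [|[|[|r]]] //= _ Hr; [lia | constructor 4; lia | constructor 2; lia].
- have Hc : coprime (2 ^ m.+1) (j + 1).
    apply: coprimeXl; rewrite coprime2n addn1 /= Hj //.
  rewrite Gauss_dvdl // E2 in Hd.
  case/dvdnP: Hd => r Hr.
  have Hr3 : r < 2.
    rewrite ltnNge; apply/negP => Hr3.
    have := leq_mul Hr3 (leqnn (2 * P)); lia.
  move: Hr3 Hr; case: r => [|[|r]] //= _ Hr; [constructor 1; lia | constructor 3; lia].
Qed.

Local Open Scope ring_scope.

Section T.
Variable (R : finComNzRingType) (n : nat).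
Lemma char0 : ring_char R (2 ^ n) -> (2 ^ n)%:R = 0 :> R.
Proof. by case=> _ []. Qed.

Lemma charn : ring_char R (2 ^ n) -> forall k, (0 < k < 2 ^ n)%N -> k%:R != 0 :> R.
Proof. by case=> _ [_ H] k /andP [] /H. Qed.

Lemma natR_mod : ring_char R (2 ^ n) -> forall k, k%:R = (k %% 2 ^ n)%:R :> R.
Proof.
move=> Hc k; by rewrite {1}(divn_eq k (2 ^ n)) natrD natrM char0 // mulr0 add0r.
Qed.

Lemma natR_inj : ring_char R (2 ^ n) -> forall a b, (a < 2 ^ n)%N -> (b < 2 ^ n)%N ->
  a%:R = b%:R :> R -> a = b.
Proof.
move=> Hc.
suff H : forall a b, (a <= b)%N -> (b < 2 ^ n)%N -> a%:R = b%:R :> R -> a = b.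
  move=> a b Ha Hb E; case: (leqP a b) => Hab; first exact: H.
  by apply/esym/H => //; apply: ltnW.
move=> a b Hab Hb E.
have : (b - a)%:R == 0 :> R by rewrite natrB // E subrr.
case: (posnP (b - a)) => [Hz|Hp]; first by move=> _; lia.
by rewrite (negbTE (charn Hc _)) //; apply/andP; split => //; lia.
Qed.

Lemma natR_eq : ring_char R (2 ^ n) -> forall k j,
  ((k%:R : R) == j%:R) = (k == j %[mod 2 ^ n]).
Proof.
move=> Hc k j; rewrite (natR_mod Hc k) (natR_mod Hc j).
have Hp : (0 < 2 ^ n)%N by rewrite expn_gt0.
apply/eqP/eqP => [|->] //; apply: natR_inj => //; exact: ltn_pmod.
Qed.
End T.
Definition roots (R : finComNzRingType) := [set u : R | u ^+ 2 == 1].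

Lemma adjE (R : finComNzRingType) (x y : R) :
  inv_cayley_adj x y = ((x - y) ^+ 2 == 1).
Proof.
rewrite /inv_cayley_adj; case: eqP => [->|] //=.
by rewrite subrr expr0n /= eq_sym oner_eq0.
Qed.

Lemma adj_sym (R : finComNzRingType) : symmetric (@inv_cayley_adj R).
Proof. by move=> x y; rewrite !adjE -opprB sqrrN. Qed.

Lemma adj_irr (R : finComNzRingType) : irreflexive (@inv_cayley_adj R).
Proof. by move=> x; rewrite /inv_cayley_adj eqxx. Qed.

Lemma nbr_card (R : finComNzRingType) (x : R) :
  #|[set y | inv_cayley_adj x y]| = #|roots R|.
Proof.
have -> : [set y | inv_cayley_adj x y] = (fun y => x - y) @^-1: roots R.
  by apply/setP => y; rewrite !inE adjE.
apply: card_preimset => a b /addrI; exact: oppr_inj.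
Qed.

Lemma darts_card (R : finComNzRingType) :
  #|darts (@inv_cayley_adj R)| = (#|R| * #|roots R|)%N.
Proof.
have -> : darts (@inv_cayley_adj R) =
    (fun d : R * R => (d.1, d.1 - d.2)) @^-1: setX [set: R] (roots R).
  by apply/setP => -[x y]; rewrite !inE /is_dart /= adjE.
rewrite card_preimset ?cardsX ?cardsT //.
move=> [a b] [c d] /= [E1 E2]; subst c; congr pair.
by move/addrI/oppr_inj: E2.
Qed.

Lemma tri_free (R : finComNzRingType) (n : nat) : (2 ^ n)%:R = 0 :> R ->
  forall u v w : R, inv_cayley_adj u v -> inv_cayley_adj v w -> inv_cayley_adj w u -> False.
Proof.
move=> H0 u v w; rewrite !adjE => /eqP Ha /eqP Hb /eqP Hc.
have E : w - u = - ((u - v) + (v - w)) by ring.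
move: Hc; rewrite E sqrrN sqrrD Ha Hb => Hc.
have E2 : (u - v) * (v - w) *+ 2 = -1.
  transitivity ((1 + (u - v) * (v - w) *+ 2 + 1) - 1 - 1); first by ring.
  by rewrite Hc; ring.
have : ((u - v) * (v - w) *+ 2) ^+ n = (-1) ^+ n by rewrite E2.
rewrite -mulr_natr exprMn -natrX H0 mulr0 => /esym /eqP.
by rewrite signr_eq0.
Qed.
Lemma rs_dart (T : finType) (e : rel T) (s : {perm (T * T)}) :
  rotation_system e s -> forall d, is_dart e d -> is_dart e (s d).
Proof.
move=> [H1 _] d Hd; apply/negPn/negP => Hn.
have E := perm_inj (H1 _ Hn).
by rewrite E Hd in Hn.
Qed.

Lemma face_inj (T : finType) (s : {perm (T * T)}) : injective (face_perm s).
Proof.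
move=> [a b] [c d]; rewrite /face_perm /= => /perm_inj [-> ->]; done.
Qed.

Lemma face_dart (T : finType) (e : rel T) (s : {perm (T * T)}) :
  symmetric e -> rotation_system e s -> forall d, is_dart e d -> is_dart e (face_perm s d).
Proof.
move=> esym rs [u v] Hd; apply: (rs_dart rs); rewrite /is_dart /= esym; exact Hd.
Qed.

Lemma face_fst (T : finType) (e : rel T) (s : {perm (T * T)}) :
  symmetric e -> rotation_system e s -> forall d, is_dart e d -> (face_perm s d).1 = d.2.
Proof.
move=> esym [_ [H2 _]] [u v] Hd; rewrite /face_perm /= H2 //.
by rewrite /is_dart /= esym.
Qed.

Lemma face_iter_dart (T : finType) (e : rel T) (s : {perm (T * T)}) :
  symmetric e -> rotation_system e s -> forall k d, is_dart e d ->
  is_dart e (iter k (face_perm s) d).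
Proof.
move=> esym rs; elim=> [|k IH] d Hd //=; apply: face_dart => //; exact: IH.
Qed.

Lemma face_conn_dart (T : finType) (e : rel T) (s : {perm (T * T)}) :
  symmetric e -> rotation_system e s -> forall d z, is_dart e d ->
  fconnect (face_perm s) d z -> is_dart e z.
Proof.
move=> esym rs d z Hd /iter_findex <-; exact: face_iter_dart.
Qed.

Lemma order_ge4 (T : finType) (e : rel T) (s : {perm (T * T)}) :
  symmetric e -> irreflexive e ->
  (forall u v w, e u v -> e v w -> e w u -> False) ->
  (forall v u, e v u -> exists y, e v y && (y != u)) ->
  rotation_system e s -> forall d, is_dart e d -> (4 <= fingraph.order (face_perm s) d)%N.
Proof.
move=> esym eirr tri deg2 rs d Hd.
have finj := @face_inj T s.
have Hit := iter_order finj d.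
have Hgt := fingraph.order_gt0 (face_perm s) d.
rewrite leqNgt; apply/negP => Hlt.
set f := face_perm s in Hit Hgt Hlt finj.
have fd : forall d, is_dart e d -> is_dart e (f d) by exact: face_dart.
have ff : forall d, is_dart e d -> (f d).1 = d.2 by exact: face_fst.
move: Hit Hgt Hlt; case: (fingraph.order f d) => [|[|[|[|k]]]] //= Hit _ _.
- have := ff d Hd; rewrite Hit => E.
  by move: Hd; rewrite /is_dart E eirr.
- have Hd1 := fd d Hd.
  have E1 := ff d Hd.
  have E2 := ff _ Hd1; rewrite Hit in E2.
  have Ed1 : f d = (d.2, d.1) by rewrite [f d]surjective_pairing E1 E2.
  have Hs : s (d.2, d.1) = (d.2, d.1) := Ed1.
  have Hvu : e d.2 d.1 by rewrite esym.
  have [y /andP [Hy Hyu]] := deg2 _ _ Hvu.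
  have [_ [_ H3]] := rs.
  have := H3 (d.2, d.1) (d.2, y) Hvu Hy erefl.
  move/iter_findex; rewrite iter_fix // => -[] E.
  by rewrite E eqxx in Hyu.
- have Hd1 := fd d Hd.
  have Hd2 := fd _ Hd1.
  have E1 := ff d Hd.
  have E2 := ff _ Hd1.
  have E3 := ff _ Hd2; rewrite Hit in E3.
  apply: (tri d.1 d.2 (f d).2).
  + exact Hd.
  + by move: Hd1; rewrite /is_dart E1.
  + by move: Hd2; rewrite /is_dart E2 -E3.
Qed.

Definition orbits (T : finType) (e : rel T) (s : {perm (T * T)}) :=
  [set [set z | fconnect (face_perm s) d z] | d in darts e].

Lemma orbits_sum (T : finType) (e : rel T) (s : {perm (T * T)}) :
  symmetric e -> rotation_system e s ->
  #|darts e| = \sum_(A in orbits e s) #|A|.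
Proof.
move=> esym rs.
have finj := @face_inj T s.
set f := face_perm s in finj *.
have -> : orbits e s = equivalence_partition (fconnect f) (darts e).
  apply: eq_in_imset => d; rewrite inE => Hd.
  apply/setP => z; rewrite !inE.
  case Hc: (fconnect f d z); rewrite ?andbF ?andbT //.
  by have := face_conn_dart esym rs Hd Hc; rewrite /is_dart => ->.
apply: card_partition; apply: equivalence_partitionP.
move=> x y z _ _ _; split; first exact: connect0.
move=> Hxy; apply/idP/idP => H.
  by apply: connect_trans H; rewrite fconnect_sym.
exact: connect_trans Hxy H.
Qed.

Lemma orbit_card (T : finType) (e : rel T) (s : {perm (T * T)}) A :
  A \in orbits e s -> exists2 d, is_dart e d & #|A| = fingraph.order (face_perm s) d.
Proof.
case/imsetP => d; rewrite inE => Hd ->; exists d => //.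
by apply: eq_card => z; rewrite inE.
Qed.

Lemma faces_le (T : finType) (e : rel T) (s : {perm (T * T)}) k :
  symmetric e -> rotation_system e s ->
  (forall d, is_dart e d -> k <= fingraph.order (face_perm s) d)%N ->
  (k * #|orbits e s| <= #|darts e|)%N.
Proof.
move=> esym rs H; rewrite (orbits_sum esym rs) mulnC -sum_nat_const.
apply: leq_sum => A HA; have [d Hd ->] := orbit_card HA; exact: H.
Qed.

Lemma faces_eq (T : finType) (e : rel T) (s : {perm (T * T)}) k :
  symmetric e -> rotation_system e s ->
  (forall d, is_dart e d -> fingraph.order (face_perm s) d = k) ->
  #|darts e| = (k * #|orbits e s|)%N.
Proof.
move=> esym rs H; rewrite (orbits_sum esym rs) mulnC -sum_nat_const.
apply: eq_bigr => A HA; have [d Hd ->] := orbit_card HA; exact: H.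
Qed.

Lemma num_faces_E (T : finType) (e : rel T) (s : {perm (T * T)}) :
  (forall x, exists y, e x y) -> num_faces e s = #|orbits e s|.
Proof.
move=> H; rewrite /num_faces /orbits.
suff -> : isolated_vertices e = set0 by rewrite cards0 addn0.
apply/setP => x; rewrite !inE; have [y Hy] := H x.
by apply/negP => /forallP /(_ y); rewrite Hy.
Qed.

Lemma order_le_iter (T : finType) (f : T -> T) x :
  iter 4 f x = x -> (fingraph.order f x <= 4)%N.
Proof.
move=> H.
have := @order_le_cycle T f [:: x; f x; f (f x); f (f (f x))] _ x.
apply => //=; first by rewrite !eqxx /= -[f (f (f (f x)))]/(iter 4 f x) H eqxx.
by rewrite inE eqxx.
Qed.

Lemma ncomp_conn (T : finType) (e : rel T) :
  symmetric e -> (num_components e = 1)%N -> graph_connected e.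
Proof.
move=> esym H x y.
have Hx : [set z | connect e x z] \in [set [set z | connect e x0 z] | x0 : T] by apply: imset_f.
have Hy : [set z | connect e y z] \in [set [set z | connect e x0 z] | x0 : T] by apply: imset_f.
have := card_le1_eqP (eq_leq H) _ _ Hx Hy.
move/setP/(_ y); rewrite !inE connect0 => E; by rewrite ?E -?E.
Qed.

Lemma conn_ncomp (T : finType) (e : rel T) (x0 : T) :
  graph_connected e -> num_components e = 1%N.
Proof.
move=> H; rewrite /num_components.
suff -> : [set [set z | connect e x z] | x : T] = [set [set: T]] by rewrite cards1.
apply/setP => A; rewrite inE; apply/imsetP/eqP => [[x _ ->]|->].
  by apply/setP => z; rewrite !inE H.
by exists x0 => //; apply/setP => z; rewrite !inE H.
Qed.

Lemma ncomp_ge1 (T : finType) (e : rel T) (x0 : T) : (1 <= num_components e)%N.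
Proof.
rewrite card_gt0; apply/set0Pn; exists [set z | connect e x0 z]; exact: imset_f.
Qed.

Section S.
Variables (R : finComNzRingType) (m : nat).
Hypothesis Hc : ring_char R (2 ^ m.+3).
Let P := (2 ^ m)%N.
Definition hh := (2 ^ m.+2)%:R : R.

Lemma P4 : (2 ^ m.+2 = 4 * P)%N. Proof. by rewrite !expnS mulnA. Qed.
Lemma P8 : (2 ^ m.+3 = 8 * P)%N. Proof. by rewrite !expnS !mulnA. Qed.
Lemma Ppos : (0 < P)%N. Proof. by rewrite expn_gt0. Qed.

Lemma natR_small a b : (a < 8 * P)%N -> (b < 8 * P)%N -> ((a%:R : R) == b%:R) = (a == b).
Proof.
move=> Ha Hb; rewrite (natR_eq Hc) P8 !modn_small //.
Qed.

Lemma e1 : (1 : R) = 1%:R. Proof. by []. Qed.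
Lemma em1 : (-1 : R) = (8 * P - 1)%:R.
Proof. rewrite natrB; last by have := Ppos; lia. by rewrite -P8 char0 // sub0r. Qed.
Lemma ea : (1 + hh : R) = (4 * P + 1)%:R.
Proof. by rewrite /hh P4 natrD addrC. Qed.
Lemma eb : (-1 + hh : R) = (4 * P - 1)%:R.
Proof. rewrite natrB; last by have := Ppos; lia. by rewrite /hh P4 addrC. Qed.

Lemma hh2 : hh + hh = 0.
Proof. by rewrite /hh -natrD addnn -mul2n -expnS char0. Qed.
Lemma hhsq : hh * hh = 0.
Proof.
rewrite /hh -natrM -expnD.
have -> : (m.+2 + m.+2 = m.+3 + m.+1)%N by lia.
by rewrite expnD natrM char0 // mul0r.
Qed.
Lemma hhN : - hh = hh.
Proof. by apply/esym/eqP; rewrite -addr_eq0 hh2. Qed.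

Lemma d1 : ((1 : R) == -1) = false.
Proof. by rewrite em1 e1 natR_small //; have := Ppos; lia. Qed.
Lemma d2 : ((1 : R) == 1 + hh) = false.
Proof. by rewrite ea e1 natR_small //; have := Ppos; lia. Qed.
Lemma d3 : ((1 : R) == -1 + hh) = false.
Proof. rewrite eb e1 natR_small //; have := Ppos; try lia. Qed.
Lemma d4 : ((-1 : R) == 1 + hh) = false.
Proof. by rewrite ea em1 natR_small //; have := Ppos; lia. Qed.
Lemma d5 : ((-1 : R) == -1 + hh) = false.
Proof. by rewrite eb em1 natR_small //; have := Ppos; lia. Qed.
Lemma d6 : ((1 + hh : R) == -1 + hh) = false.
Proof. by rewrite eb ea natR_small //; have := Ppos; lia. Qed.

Definition Sset : {set R} := 1 |: (-1 |: (1 + hh |: [set -1 + hh])).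

Lemma Sset_card : #|Sset| = 4%N.
Proof.
rewrite /Sset !cardsU1 cards1 !inE.
by rewrite d1 d2 d3 d4 d5 d6.
Qed.

Lemma Sset_roots : Sset \subset roots R.
Proof.
apply/subsetP => u; rewrite !inE => /or4P [] /eqP ->.
- by rewrite expr1n.
- by rewrite sqrrN expr1n.
- have -> : (1 + hh) ^+ 2 = 1 + (hh + hh) + hh * hh by ring.
  by rewrite hh2 hhsq !addr0.
- have -> : (-1 + hh) ^+ 2 = 1 - (hh + hh) + hh * hh by ring.
  by rewrite hh2 hhsq subr0 addr0.
Qed.

Lemma roots_ge4 : (4 <= #|roots R|)%N.
Proof. by rewrite -Sset_card; apply: subset_leq_card; exact: Sset_roots. Qed.

Lemma roots_S : #|roots R| = 4%N -> forall u, (u \in roots R) = (u \in Sset).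
Proof.
move=> H u; symmetry; move: u; apply/subset_cardP; last exact: Sset_roots.
by rewrite H Sset_card.
Qed.

Lemma two_neq0 : (2 : R) != 0.
Proof. rewrite -[0]/(0%:R) -[2]/(2%:R) natR_small //; have := Ppos; lia. Qed.
End S.

Lemma adj_p1 (R : finComNzRingType) (v : R) : inv_cayley_adj v (v + 1).
Proof. by rewrite adjE opprD addrA subrr add0r sqrrN expr1n. Qed.
Lemma adj_m1 (R : finComNzRingType) (v : R) : inv_cayley_adj v (v - 1).
Proof. by rewrite adjE opprD addrA subrr add0r opprK expr1n. Qed.

Lemma deg2_lem (R : finComNzRingType) : (2 : R) != 0 ->
  forall v u : R, inv_cayley_adj v u -> exists y, inv_cayley_adj v y && (y != u).
Proof.
move=> H2 v u _; case: (eqVneq u (v + 1)) => [->|Hu].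
  exists (v - 1); rewrite adj_m1 /=; apply/negP => /eqP E.
  have : (v + 1) - (v - 1) == 0 by rewrite E subrr.
  have -> : (v + 1) - (v - 1) = 2 by ring.
  by rewrite (negbTE H2).
by exists (v + 1); rewrite adj_p1 eq_sym.
Qed.

Lemma genus1_imp (R : finComNzRingType) (m : nat) :
  ring_char R (2 ^ m.+3) -> graph_genus (@inv_cayley_adj R) 1 ->
  graph_connected (@inv_cayley_adj R) /\ graph_regular (@inv_cayley_adj R) 4.
Proof.
move=> Hc [[s [rs Heq]] _].
have esym := @adj_sym R.
have eirr := @adj_irr R.
have tri := tri_free (char0 Hc).
have deg2 := deg2_lem (two_neq0 Hc).
have Hord := order_ge4 esym eirr tri deg2 rs.
have Hle := faces_le esym rs Hord.
move: Heq; rewrite /embedding_genus num_faces_E; last by move=> x; exists (x + 1); exact: adj_p1.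
rewrite darts_card in Hle * => Heq.
have Hk := roots_ge4 Hc.
have Hc1 := ncomp_ge1 (@inv_cayley_adj R) 0.
have HV : (0 < #|R|)%N by apply/card_gt0P; exists 0.
have HK : (#|R| * 4 <= #|R| * #|roots R|)%N by rewrite leq_mul2l Hk orbT.
move: Hle Heq HK; set K := (#|R| * #|roots R|)%N => Hle Heq HK.
have Heq2 : (4 * 1 + 2 * #|R| + 2 * #|orbits (@inv_cayley_adj R) s| = 4 * num_components (@inv_cayley_adj R) + K)%N by exact: Heq.
have HK4 : K = (#|R| * 4)%N by clearbody K; lia.
have Hcc : num_components (@inv_cayley_adj R) = 1%N by lia.
have Hr : #|roots R| = 4%N by apply/eqP; rewrite -(eqn_pmul2l HV) -/K HK4.
split; first exact: ncomp_conn.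
by move=> x; rewrite nbr_card.
Qed.

Section S2.
Variables (R : finComNzRingType) (m : nat).
Hypothesis Hc : ring_char R (2 ^ m.+3).
Local Notation h := (hh R m).

Lemma dd1 : ((-1 : R) == 1) = false. Proof. by rewrite eq_sym (d1 Hc). Qed.
Lemma dd2 : ((1 + h : R) == 1) = false. Proof. by rewrite eq_sym (d2 Hc). Qed.
Lemma dd3 : ((-1 + h : R) == 1) = false. Proof. by rewrite eq_sym (d3 Hc). Qed.
Lemma dd4 : ((1 + h : R) == -1) = false. Proof. by rewrite eq_sym (d4 Hc). Qed.
Lemma dd5 : ((-1 + h : R) == -1) = false. Proof. by rewrite eq_sym (d5 Hc). Qed.
Lemma dd6 : ((-1 + h : R) == 1 + h) = false. Proof. by rewrite eq_sym (d6 Hc). Qed.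

Definition rr (u : R) : R :=
  if u == 1 then 1 + h else if u == 1 + h then -1 else
  if u == -1 then -1 + h else if u == -1 + h then 1 else u.
Definition rrinv (u : R) : R :=
  if u == 1 + h then 1 else if u == -1 then 1 + h else
  if u == -1 + h then -1 else if u == 1 then -1 + h else u.

Lemma rr1 : rr 1 = 1 + h. Proof. by rewrite /rr eqxx. Qed.
Lemma rra : rr (1 + h) = -1. Proof. by rewrite /rr eqxx dd2. Qed.
Lemma rrm1 : rr (-1) = -1 + h. Proof. by rewrite /rr dd1 (d4 Hc) eqxx. Qed.
Lemma rrb : rr (-1 + h) = 1. Proof. by rewrite /rr eqxx dd3 dd5 dd6. Qed.
Lemma rr_out u : u \notin Sset R m -> rr u = u.
Proof.
rewrite !inE => /norP [/negbTE H1 /norP [/negbTE H2 /norP [/negbTE H3 /negbTE H4]]].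
by rewrite /rr H1 H2 H3 H4.
Qed.

Lemma rrK : cancel rr rrinv.
Proof.
move=> u; case Hu: (u \in Sset R m); last first.
  rewrite rr_out ?Hu //; move: Hu; rewrite !inE.
  move=> /norP [/negbTE H1 /norP [/negbTE H2 /norP [/negbTE H3 /negbTE H4]]].
  by rewrite /rrinv H1 H2 H3 H4.
move: Hu; rewrite !inE => /or4P [] /eqP ->.
- by rewrite rr1 /rrinv eqxx.
- by rewrite rrm1 /rrinv dd6 dd5 eqxx.
- by rewrite rra /rrinv (d4 Hc) eqxx.
- by rewrite rrb /rrinv (d2 Hc) (d1 Hc) (d3 Hc) eqxx.
Qed.

Definition rot (d : R * R) : R * R := (d.1, d.1 + rr (d.2 - d.1)).

Lemma rot_inj : injective rot.
Proof.
move=> [a b] [c d] [] /= <- /addrI /(can_inj rrK) /addIr ->; done.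
Qed.

Definition rotp : {perm (R * R)} := perm rot_inj.

Lemma rstep x t : rotp (x, x + t) = (x, x + rr t).
Proof. by rewrite permE /rot /= (addrC x t) addrK. Qed.

Lemma fstep x t : face_perm rotp (x, x + t) = (x + t, (x + t) + rr (- t)).
Proof.
rewrite /face_perm /= permE /rot /=; congr (_, _ + rr _); ring.
Qed.

Lemma negA : - (1 + h) = -1 + h. Proof. by rewrite opprD (hhN Hc). Qed.
Lemma negB : - (-1 + h) = 1 + h. Proof. by rewrite opprD opprK (hhN Hc). Qed.

Lemma hh_ring (y z : R) : y = z + (h + h) -> y = z.
Proof. by rewrite (hh2 Hc) addr0. Qed.

Lemma face4 x t : t \in Sset R m -> iter 4 (face_perm rotp) (x, x + t) = (x, x + t).
Proof.
rewrite !inE => /or4P [] /eqP -> /=; rewrite !fstep ?negA ?negB ?opprK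
  ?rr1 ?rra ?rrm1 ?rrb ?negA ?negB ?opprK ?rr1 ?rra ?rrm1 ?rrb
  ?negA ?negB ?opprK ?rr1 ?rra ?rrm1 ?rrb ?negA ?negB ?opprK ?rr1 ?rra ?rrm1 ?rrb;
  by congr pair; apply: hh_ring; ring.
Qed.

Lemma dart_S : #|roots R| = 4%N -> forall d : R * R,
  is_dart (@inv_cayley_adj R) d = (d.2 - d.1 \in Sset R m).
Proof.
by move=> Hr d; rewrite /is_dart adjE -(roots_S Hc Hr) inE -opprB sqrrN.
Qed.

Lemma conn1 a t : t \in Sset R m -> fconnect rotp (a, a + 1) (a, a + t).
Proof.
rewrite !inE => /or4P [] /eqP ->.
- exact: connect0.
- by have := fconnect_iter rotp 2 (a, a + 1); rewrite /= !rstep rr1 rra.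
- by have := fconnect_iter rotp 1 (a, a + 1); rewrite /= !rstep rr1.
- by have := fconnect_iter rotp 3 (a, a + 1); rewrite /= !rstep rr1 rra rrm1.
Qed.

Lemma rot_rs : #|roots R| = 4%N -> rotation_system (@inv_cayley_adj R) rotp.
Proof.
move=> Hr; split; [|split].
- move=> [a b]; rewrite dart_S //= => Hn.
  by rewrite permE /rot /= rr_out // addrC subrK.
- by move=> d _; rewrite permE.
- move=> [a b] [a' b']; rewrite !dart_S //= => H1 H2 Ea; subst a'.
  have -> : b = a + (b - a) by rewrite addrC subrK.
  have -> : b' = a + (b' - a) by rewrite addrC subrK.
  apply: connect_trans (conn1 a H2).
  by rewrite fconnect_sym; [exact: conn1 | exact: perm_inj].
Qed.

Lemma rot_order : #|roots R| = 4%N -> forall d, is_dart (@inv_cayley_adj R) d ->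
  fingraph.order (face_perm rotp) d = 4%N.
Proof.
move=> Hr d Hd; apply/eqP; rewrite eqn_leq; apply/andP; split.
  apply: order_le_iter.
  case: d Hd => a b; rewrite dart_S //= => Ht.
  have -> : b = a + (b - a) by rewrite addrC subrK.
  exact: face4.
apply: (order_ge4 (@adj_sym R) (@adj_irr R) (tri_free (char0 Hc)) (deg2_lem (two_neq0 Hc)) (rot_rs Hr)).
exact: Hd.
Qed.
End S2.

Lemma reg_genus (R : finComNzRingType) (m : nat) (Hc : ring_char R (2 ^ m.+3)) :
  graph_connected (@inv_cayley_adj R) -> graph_regular (@inv_cayley_adj R) 4 ->
  graph_genus (@inv_cayley_adj R) 1.
Proof.
move=> Hconn Hreg.
have Hr : #|roots R| = 4%N by rewrite -(nbr_card 0); exact: Hreg.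
have Hc1 := conn_ncomp 0 Hconn.
have Hex : forall x : R, exists y, inv_cayley_adj x y by move=> x; exists (x + 1); exact: adj_p1.
have HD := darts_card R; rewrite Hr in HD.
split.
  exists (rotp Hc); split; first exact: rot_rs.
  rewrite /embedding_genus num_faces_E // Hc1.
  have := faces_eq (@adj_sym R) (rot_rs Hc Hr) (rot_order Hc Hr).
  rewrite HD => H.
  suff : (4 * 1 + 2 * #|R| + 2 * #|orbits (@inv_cayley_adj R) (rotp Hc)| = 4 * 1 + #|R| * 4)%N.
    by rewrite -HD.
  lia.
move=> s rs; rewrite num_faces_E // Hc1.
have := faces_le (@adj_sym R) rs (order_ge4 (@adj_sym R) (@adj_irr R) (tri_free (char0 Hc)) (deg2_lem (two_neq0 Hc)) rs).
rewrite HD => H.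
suff : (4 * 1 + 2 * #|R| + 2 * #|orbits (@inv_cayley_adj R) s| <= 4 * 1 + #|R| * 4)%N.
  by rewrite -HD.
lia.
Qed.

Lemma S_nat (R : finComNzRingType) (m : nat) (Hc : ring_char R (2 ^ m.+3)) u :
  u \in Sset R m -> exists j, u = j%:R.
Proof.
rewrite !inE => /or4P [] /eqP ->.
- by exists 1%N.
- exists (8 * 2 ^ m - 1)%N; exact: em1 Hc.
- exists (4 * 2 ^ m + 1)%N; exact: ea.
- exists (4 * 2 ^ m - 1)%N; exact: eb.
Qed.

Lemma all_nat (R : finComNzRingType) (m : nat) (Hc : ring_char R (2 ^ m.+3)) :
  graph_connected (@inv_cayley_adj R) -> graph_regular (@inv_cayley_adj R) 4 ->
  forall x : R, exists k, x == k%:R.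
Proof.
move=> Hconn Hreg.
have Hr : #|roots R| = 4%N by rewrite -(nbr_card 0); exact: Hreg.
have step : forall y z : R, (exists k, y = k%:R) -> inv_cayley_adj y z -> exists j, z = j%:R.
  move=> y z [k ->] Hyz.
  have : is_dart (@inv_cayley_adj R) (k%:R, z) := Hyz.
  rewrite (dart_S Hc Hr) /= => /(S_nat Hc) [j Hj].
  by exists (k + j)%N; rewrite natrD -Hj addrC subrK.
move=> x; have := Hconn 0 x; case/connectP => p Hp ->.
suff : exists k, last 0 p = k%:R by case=> k ->; exists k.
have : exists k, (0 : R) = k%:R by exists 0%N.
elim: p 0 Hp => [|z p IH] y //= /andP [Hyz Hp] Hy.
by apply: IH => //; exact: step Hyz.
Qed.

Lemma Znat_eq (m : nat) k j : ((k%:R : 'Z_(2 ^ m.+3)) == j%:R) = (k == j %[mod 2 ^ m.+3]).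
Proof.
have Hp : (1 < 2 ^ m.+3)%N by rewrite -{1}(expn0 2) ltn_exp2l.
by rewrite -(Zp_nat_mod Hp k) -(Zp_nat_mod Hp j); apply/eqP/eqP => [/(congr1 val)|->] //=;
  rewrite !val_Zp_nat // !modn_mod.
Qed.

Section Iso.
Variables (R : finComNzRingType) (m : nat).
Hypothesis Hc : ring_char R (2 ^ m.+3).
Hypothesis Hall : forall x : R, exists k, x == k%:R.

Definition fz (x : R) : 'Z_(2 ^ m.+3) := (xchoose (Hall x))%:R.

Lemma fzE k : fz k%:R = k%:R.
Proof.
have := xchooseP (Hall k%:R); rewrite (natR_eq Hc) -Znat_eq => /eqP E.
by rewrite /fz -E.
Qed.

Lemma fz_nmod : GRing.nmod_morphism fz.
Proof.
split; first by rewrite -[0 : R]/(0%:R) fzE.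
move=> x y; have [a /eqP ->] := Hall x; have [b /eqP ->] := Hall y.
by rewrite -natrD !fzE natrD.
Qed.

Lemma fz_mon : GRing.monoid_morphism fz.
Proof.
split; first by rewrite -[1 : R]/(1%:R) fzE.
move=> x y; have [a /eqP ->] := Hall x; have [b /eqP ->] := Hall y.
by rewrite -natrM !fzE natrM.
Qed.

Lemma fz_bij : bijective fz.
Proof.
have Hp : (1 < 2 ^ m.+3)%N by rewrite -{1}(expn0 2) ltn_exp2l.
exists (fun i : 'Z_(2 ^ m.+3) => ((i : nat)%:R : R)).
  move=> x; have [a /eqP ->] := Hall x.
  by rewrite fzE val_Zp_nat // -natR_mod.
by move=> i; rewrite fzE natr_Zp.
Qed.
End Iso.

Lemma reg_iso (R : finComNzRingType) (m : nat) (Hc : ring_char R (2 ^ m.+3)) :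
  graph_connected (@inv_cayley_adj R) -> graph_regular (@inv_cayley_adj R) 4 ->
  exists f : {rmorphism R -> 'Z_(2 ^ m.+3)}, bijective f.
Proof.
move=> Hconn Hreg.
have Hall := all_nat Hc Hconn Hreg.
pose aM := GRing.isNmodMorphism.Build _ _ (@fz R m Hall) (fz_nmod Hc Hall).
pose mM := GRing.isMonoidMorphism.Build _ _ (@fz R m Hall) (fz_mon Hc Hall).
pose phi : {rmorphism R -> 'Z_(2 ^ m.+3)} := HB.pack (@fz R m Hall) aM mM.
exists phi; exact: fz_bij.
Qed.

Lemma iso_reg (R : finComNzRingType) (m : nat) (Hc : ring_char R (2 ^ m.+3)) :
  (exists f : {rmorphism R -> 'Z_(2 ^ m.+3)}, bijective f) ->
  graph_connected (@inv_cayley_adj R) /\ graph_regular (@inv_cayley_adj R) 4.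
Proof.
case=> f Hf.
have Hall : forall x : R, exists k, (k < 8 * 2 ^ m)%N /\ x = k%:R.
  move=> x; exists ((f x : nat) %% (8 * 2 ^ m))%N; split.
    by rewrite ltn_pmod // muln_gt0 expn_gt0.
  apply: (bij_inj Hf); rewrite rmorph_nat.
  have Hp : (1 < 2 ^ m.+3)%N by rewrite -{1}(expn0 2) ltn_exp2l.
  have -> : (8 * 2 ^ m = 2 ^ m.+3)%N by rewrite !expnS !mulnA.
  by rewrite Zp_nat_mod // natr_Zp.
split.
  have H0 : forall k, connect (@inv_cayley_adj R) 0 k%:R.
    elim=> [|k IH]; first exact: connect0.
    apply: connect_trans IH _; apply: connect1; rewrite -natr1; exact: adj_p1.
  move=> x y; have [a [_ ->]] := Hall x; have [b [_ ->]] := Hall y.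
  apply: connect_trans (H0 b); rewrite (sym_connect_sym (@adj_sym R)); exact: H0.
move=> x; rewrite nbr_card -(Sset_card Hc); apply/eqP; rewrite eqn_leq.
rewrite (subset_leq_card (Sset_roots Hc)) andbT; apply: subset_leq_card.
apply/subsetP => u; rewrite inE => Hu.
have [k [Hk Eu]] := Hall u; move: Hu; rewrite Eu -natrX -[1 : R]/(1%:R) (natR_eq Hc).
rewrite (_ : 2 ^ m.+3 = 8 * 2 ^ m)%N; last by rewrite !expnS !mulnA.
move/eqP => Hmod; have := nt Hk Hmod.
case=> ->; rewrite !inE.
- by rewrite eqxx.
- by rewrite -(em1 Hc) eqxx orbT.
- by rewrite -(ea R m) eqxx !orbT.
- by rewrite -(eb R m) eqxx !orbT.
Qed.

Unset Implicit Arguments.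

Theorem mainTheorem6 (R : finComNzRingType) (n : nat) :
  (3 <= n)%N -> local_ring R -> ring_char R (2 ^ n) ->
  (graph_genus (@inv_cayley_adj R) 1 <->
     (graph_connected (@inv_cayley_adj R) /\ graph_regular (@inv_cayley_adj R) 4)) /\
  ((graph_connected (@inv_cayley_adj R) /\ graph_regular (@inv_cayley_adj R) 4) <->
     exists f : {rmorphism R -> 'Z_(2 ^ n)}, bijective f).
Proof.
case: n => [|[|[|m]]] // _ _ Hc; split; split.
- exact: genus1_imp Hc.
- by case; exact: reg_genus Hc.
- by case; exact: reg_iso Hc.
- exact: iso_reg Hc.
Qed.
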